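(* Suppose $\Re s=1$, $u\ge1$, and $|s|>u$. For integers $\nu\ge0$, \[ \left|\frac{\partial^{\nu}}{\partial u^{\nu}}\left(s\frac{\partial}{\partial s}G(u,s)\right)\right|\ll_{\nu}\frac{|s|^{\nu}}{u^{2\nu}}, \] with implied constant depending only on $\nu$.
   Context: $G(u,s):=\int_{0}^{1/u}\frac{1-e^{-ts}}{t}\,dt$. *)

(* Defs.v *)
From Stdlib Require Import Reals ClassicalEpsilon.
From Coquelicot Require Import Coquelicot.
Open Scope R_scope.

Definition Cexp (z : C) : C :=
  (exp (Re z) * cos (Im z), exp (Re z) * sin (Im z)).

(* G(u,s) = int_0^{1/u} (1 - e^{-ts})/t dt  (complex-valued Riemann integral;
   the integrand is bounded near t = 0, its value at the single point t = 0
   is irrelevant) *)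
Definition G (u : R) (s : C) : C :=
  RInt (V := C_R_CompleteNormedModule)
       (fun t : R => ((1 - Cexp (- (RtoC t * s))) / RtoC t)%C) 0 (1 / u).

Definition CDerive (f : C -> C) (z : C) : C :=
  epsilon (inhabits (RtoC 0)) (fun l : C => is_derive (K := C_AbsRing) (V := C_NormedModule) f z l).

Fixpoint DerC (n : nat) (f : R -> C) : R -> C :=
  match n with
  | O => f
  | S m => fun x => (Derive (fun y => Re (DerC m f y)) x,
                      Derive (fun y => Im (DerC m f y)) x)
  end.

Definition sdG (u : R) (s : C) : C := (s * CDerive (fun z => G u z) s)%C.

(* Main.v *)
Require Import Defs.
From Stdlib Require Import Reals.
From Coquelicot Require Import Coquelicot.
Open Scope R_scope.
From Stdlib Require Import Lra Lia ClassicalEpsilon List.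
Import ListNotations.
Open Scope R_scope.


Lemma Cexp_add a b : Cexp (a + b) = (Cexp a * Cexp b)%C.
Proof.
destruct a as [x1 y1], b as [x2 y2]. unfold Cexp, Cplus, Cmult; simpl.
rewrite exp_plus, cos_plus, sin_plus. f_equal; ring.
Qed.

Lemma Cexp_0 : Cexp 0 = 1%C.
Proof. unfold Cexp, RtoC; simpl. rewrite exp_0, cos_0, sin_0. f_equal; ring. Qed.

Lemma Cmod_Cexp w : Cmod (Cexp w) = exp (Re w).
Proof.
destruct w as [x y]. unfold Cmod, Cexp; cbn [fst snd Re Im].
replace ((exp x * cos y) ^ 2 + (exp x * sin y) ^ 2) with (exp x ^ 2).
- apply sqrt_pow2. left; apply exp_pos.
- pose proof (sin2_cos2 y) as E. unfold Rsqr in E. replace (exp x ^ 2) with (exp x ^ 2 * 1) by ring. rewrite <- E. ring.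
Qed.

Lemma Cmod_le_sum a b : Cmod (a, b) <= Rabs a + Rabs b.
Proof.
unfold Cmod; cbn [fst snd Re Im]. rewrite <- (sqrt_pow2 (Rabs a + Rabs b)).
2: { pose proof (Rabs_pos a); pose proof (Rabs_pos b); lra. }
apply sqrt_le_1_alt.
rewrite <- (pow2_abs a) at 1. rewrite <- (pow2_abs b) at 1.
pose proof (Rabs_pos a); pose proof (Rabs_pos b). nra.
Qed.

Lemma Rabs_le_Cmod_re a b : Rabs a <= Cmod (a, b).
Proof. apply (re_le_Cmod (a,b)). Qed.
Lemma Rabs_le_Cmod_im a b : Rabs b <= Cmod (a, b).
Proof.
unfold Cmod; cbn [fst snd Re Im]. rewrite <- sqrt_Rsqr_abs. apply sqrt_le_1_alt. unfold Rsqr.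
nra.
Qed.

Lemma exp_taylor_R x : Rabs x <= 1/2 -> 0 <= exp x - 1 - x <= 2 * x^2.
Proof.
intros Hx. pose proof (exp_ineq1_le x). pose proof (exp_ineq1_le (-x)).
pose proof (exp_pos x).
assert (E : exp x * exp (-x) = 1). { rewrite <- exp_plus. replace (x + -x) with 0 by ring. apply exp_0. }
apply Rabs_le_between in Hx.
split. lra.
assert (exp x * (1 - x) <= 1) by nra.
nra.
Qed.

Lemma sin_near y : Rabs y <= 1 -> Rabs (sin y - y) <= Rabs y ^ 3 /\ Rabs (sin y) <= Rabs y.
Proof.
assert (Hs : forall a, 0 <= a <= 1 -> a - a^3/6 <= sin a <= a).
{ intros a Ha. pose proof PI2_1.
  destruct (sin_bound a 0 ltac:(lra) ltac:(lra)) as [H1 _].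
  replace (sin_approx a (2*0+1)) with (a - a^3/6) in H1
    by (unfold sin_approx, sin_term; simpl; field).
  destruct (Req_dec a 0) as [->|Hn]. rewrite sin_0; lra.
  pose proof (sin_lt_x a ltac:(lra)). lra. }
intros Hy. destruct (Rle_dec 0 y) as [Hp|Hn].
- rewrite (Rabs_right y) by lra. apply Rabs_le_between in Hy.
  destruct (Hs y ltac:(lra)).
  assert (0 <= y^3) by (apply pow_le; lra).
  split; apply Rabs_le_between; split; try nra.
- rewrite (Rabs_left y) by lra. apply Rabs_le_between in Hy.
  destruct (Hs (-y) ltac:(lra)). rewrite sin_neg in *.
  assert (0 <= (-y)^3) by (apply pow_le; lra).
  split; apply Rabs_le_between; split; try nra.
Qed.

Lemma cos_near y : Rabs y <= 1 -> Rabs (cos y - 1) <= y^2 / 2.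
Proof.
intros Hy. apply Rabs_le_between in Hy. pose proof PI2_1.
destruct (cos_bound y 0 ltac:(lra) ltac:(lra)) as [H1 _].
replace (cos_approx y (2*0+1)) with (1 - y^2/2) in H1
    by (unfold cos_approx, cos_term; simpl; field).
pose proof (COS_bound y).
apply Rabs_le_between. nra.
Qed.

Lemma Cexp_taylor w : Cmod w <= 1/2 -> Cmod (Cexp w - 1 - w) <= 3 * Cmod w ^ 2.
Proof.
destruct w as [x y]. intros Hw.
pose proof (Rabs_le_Cmod_re x y) as Hx. pose proof (Rabs_le_Cmod_im x y) as Hy.
assert (Hr : Cmod (x,y) ^ 2 = x^2 + y^2).
{ unfold Cmod; cbn [fst snd Re Im]. rewrite pow2_sqrt. ring. nra. }
rewrite Hr.
unfold Cexp, Cminus, Cplus, Copp, RtoC; cbn [fst snd Re Im].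
eapply Rle_trans. apply Cmod_le_sum.
assert (Hx' : Rabs x <= 1/2) by lra. assert (Hy' : Rabs y <= 1) by lra.
destruct (exp_taylor_R x Hx') as [E1 E2].
destruct (sin_near y Hy') as [S1 S2]. pose proof (cos_near y Hy') as C1.
assert (Hex : exp x <= 2).
{ apply Rabs_le_between in Hx'. nra. }
pose proof (exp_pos x).
assert (A1 : Rabs (exp x * cos y + - (1) + - x) <= 2 * x^2 + y^2).
{ replace (exp x * cos y + - (1) + - x) with (exp x * (cos y - 1) + (exp x - 1 - x)) by ring.
  eapply Rle_trans. apply Rabs_triang. rewrite Rabs_mult, (Rabs_right (exp x)) by lra.
  rewrite (Rabs_right (exp x - 1 - x)) by lra.
  assert (0 <= Rabs (cos y - 1)) by apply Rabs_pos. nra. }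
assert (Ex1 : Rabs (exp x - 1) <= 2 * Rabs x).
{ apply Rabs_le_between in Hx'. apply Rabs_le_between. destruct (Rle_dec 0 x).
  rewrite Rabs_right by lra. nra. rewrite Rabs_left by lra. nra. }
assert (A2 : Rabs (exp x * sin y + - (0) + - y) <= x^2 + 2 * y^2).
{ replace (exp x * sin y + - (0) + - y) with ((exp x - 1) * sin y + (sin y - y)) by ring.
  eapply Rle_trans. apply Rabs_triang. rewrite Rabs_mult.
  assert (Rabs y ^ 3 <= y^2).
  { replace (y^2) with (Rabs y ^2) by (first [apply pow2_abs | symmetry; apply pow2_abs]). pose proof (Rabs_pos y).
    simpl. nra. }
  assert (2 * Rabs x * Rabs y <= x^2 + y^2).
  { rewrite <- (pow2_abs x), <- (pow2_abs y). pose proof (pow2_ge_0 (Rabs x - Rabs y)). nra. }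
  pose proof (Rabs_pos (exp x - 1)). pose proof (Rabs_pos (sin y)). nra. }
lra.
Qed.


Definition CD (f : C -> C) z l := is_derive (K := C_AbsRing) (V := C_NormedModule) f z l.

Lemma CD_of_bound (f : C -> C) z0 l d M : 0 < d -> 0 <= M ->
  (forall z, Cmod (z - z0) < d -> Cmod (f z - f z0 - (z - z0) * l) <= M * Cmod (z - z0) ^ 2) ->
  CD f z0 l.
Proof.
intros Hd HM H. split. apply is_linear_scal_l.
intros x Hx. apply (is_filter_lim_locally_unique (K:=C_AbsRing) (V:=AbsRing_NormedModule C_AbsRing)) in Hx. subst x.
intros eps. apply (locally_norm_le_locally (K:=C_AbsRing) (V:=AbsRing_NormedModule C_AbsRing)).
assert (Hp : 0 < Rmin d (eps / (M + 1))).
{ apply Rmin_pos. lra. apply Rdiv_lt_0_compat. apply cond_pos. lra. }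
exists (mkposreal _ Hp). intros z Hz. unfold ball_norm in Hz. simpl in Hz.
change (Cmod (f z - f z0 - (z - z0) * l)%C <= eps * Cmod (z - z0)%C).
change (Cmod (z - z0)%C < Rmin d (eps / (M + 1))) in Hz.
assert (H1 := Rmin_l d (eps / (M+1))). assert (H2 := Rmin_r d (eps / (M+1))).
eapply Rle_trans. apply H. lra.
pose proof (Cmod_ge_0 (z - z0)%C) as H0.
assert (M * Cmod (z - z0)%C <= eps).
{ assert (M * Cmod (z - z0)%C <= M * (eps / (M+1))) by (apply Rmult_le_compat_l; lra).
  assert (M * (eps / (M+1)) <= eps).
  { pose proof (cond_pos eps). 
    assert (eps / (M+1) * (M+1) = eps) by (field; lra).
    assert (0 < eps / (M+1)) by (apply Rdiv_lt_0_compat; lra).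
    nra. }
  lra. }
simpl. nra.
Qed.

Lemma CD_Cexp z : CD Cexp z (Cexp z).
Proof.
apply (CD_of_bound _ _ _ (1/2) (3 * Cmod (Cexp z))); try lra.
{ pose proof (Cmod_ge_0 (Cexp z)); lra. }
intros w Hw.
replace (Cexp w - Cexp z - (w - z) * Cexp z)%C
  with (Cexp z * (Cexp (w - z) - 1 - (w - z)))%C.
2: { replace (Cexp w) with (Cexp (z + (w - z))) at 1 by (f_equal; ring).
     rewrite Cexp_add. ring. }
rewrite Cmod_mult.
pose proof (Cexp_taylor (w - z) ltac:(lra)).
pose proof (Cmod_ge_0 (Cexp z)). 
replace (3 * Cmod (Cexp z) * Cmod (w - z) ^ 2) with (Cmod (Cexp z) * (3 * Cmod (w - z) ^ 2)) by ring.
apply Rmult_le_compat_l; lra.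
Qed.

Lemma Cmod_rev_tri a b : Cmod a - Cmod (b - a) <= Cmod b.
Proof.
replace a with (b + - (b - a))%C at 1 by ring.
pose proof (Cmod_triangle b (- (b - a))%C). rewrite Cmod_opp in H. lra.
Qed.

Lemma CD_inv (z : C) : z <> 0%C -> CD (fun w => / w)%C z (- / (z * z))%C.
Proof.
intros Hz. assert (Hm : 0 < Cmod z) by (apply Cmod_gt_0; auto).
apply (CD_of_bound _ _ _ (Cmod z / 2) (2 / (Cmod z ^ 3))); try lra.
{ apply Rlt_le, Rdiv_lt_0_compat. lra. apply pow_lt; lra. }
intros w Hw. pose proof (Cmod_rev_tri z w).
assert (Hw0 : w <> 0%C). { intros ->. rewrite Cmod_0 in *. lra. }
replace (/ w - / z - (w - z) * - / (z * z))%C with ((w - z) * (w - z) / (w * (z * z)))%C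
  by (field; auto).
rewrite Cmod_div by (apply Cmult_neq_0; auto; apply Cmult_neq_0; auto).
rewrite !Cmod_mult.
assert (Cmod z / 2 <= Cmod w) by lra.
pose proof (Cmod_ge_0 (w - z)%C).
set (r := Cmod (w - z)%C) in *. set (a := Cmod z) in *. set (b := Cmod w) in *.
unfold Rdiv. rewrite Rinv_mult, Rinv_mult.
assert (/ b <= 2 / a).
{ apply (Rmult_le_reg_r b). lra. rewrite Rinv_l by lra.
  replace (2 / a * b) with (2 * b / a) by (field; lra).
  apply (Rmult_le_reg_r a). lra. unfold Rdiv. rewrite Rmult_assoc, Rinv_l by lra. lra. }
assert (0 < / a) by (apply Rinv_0_lt_compat; lra).
replace (2 * / a ^ 3 * r ^ 2) with (r * r * ((2 / a) * / a * / a)) by (unfold Rdiv; simpl; field; lra).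
apply Rmult_le_compat_l. nra.
assert (0 < /b) by (apply Rinv_0_lt_compat; lra).
assert (0 < / a * / a) by (apply Rmult_lt_0_compat; lra). nra.
Qed.

Lemma holo_real (phi : C -> C) x l : CD phi (RtoC x) l ->
  forall eps, 0 < eps -> exists d, 0 < d /\ forall t, Rabs (t - x) < d ->
    Cmod (phi (RtoC t) - phi (RtoC x) - RtoC (t - x) * l)%C <= eps * Rabs (t - x).
Proof.
intros [_ H] eps He. specialize (H (RtoC x) (fun P HP => HP)).
specialize (H (mkposreal eps He)).
apply (locally_le_locally_norm (K:=C_AbsRing) (V:=AbsRing_NormedModule C_AbsRing)) in H. destruct H as [d Hd].
exists d. split. apply cond_pos. intros t Ht.
specialize (Hd (RtoC t)).
assert (E : Cmod (RtoC t - RtoC x)%C = Rabs (t - x)).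
{ rewrite <- Cmod_R. f_equal. unfold RtoC, Cminus, Cplus, Copp; cbn [fst snd]. f_equal; ring. }
assert (B : ball_norm (RtoC x) d (RtoC t)).
{ unfold ball_norm. change (Cmod (RtoC t - RtoC x)%C < d). rewrite E. exact Ht. }
specialize (Hd B). change (Cmod (phi (RtoC t) - phi (RtoC x) - (RtoC t - RtoC x) * l)%C <= eps * Cmod (RtoC t - RtoC x)%C) in Hd.
rewrite E in Hd. replace (RtoC (t - x)) with (RtoC t - RtoC x)%C. exact Hd.
unfold RtoC, Cminus, Cplus, Copp; cbn [fst snd]. f_equal; ring.
Qed.

Lemma holo_real_CR (phi : C -> C) x l : CD phi (RtoC x) l ->
  is_derive (K := R_AbsRing) (V := C_R_NormedModule) (fun t => phi (RtoC t)) x l.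
Proof.
intros H. split. apply is_linear_scal_l.
intros y Hy. apply (is_filter_lim_locally_unique (K:=R_AbsRing) (V:=AbsRing_NormedModule R_AbsRing)) in Hy. subst y.
intros eps. destruct (holo_real phi x l H eps (cond_pos eps)) as [d [Hd Hb]].
apply (locally_norm_le_locally (K:=R_AbsRing) (V:=AbsRing_NormedModule R_AbsRing)). exists (mkposreal d Hd). intros t Ht.
unfold ball_norm in Ht. simpl in Ht.
rewrite <- !Cmod_norm.
change (Rabs (t - x) < d) in Ht.
rewrite scal_R_Cmult.
change (Cmod (phi t - phi x - RtoC (t - x) * l)%C <= eps * Rabs (t - x)).
apply Hb. exact Ht.
Qed.

Lemma holo_real_Re (phi : C -> C) x l : CD phi (RtoC x) l ->
  is_derive (fun t => Re (phi (RtoC t))) x (Re l).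
Proof.
intros H. split. apply is_linear_scal_l.
intros y Hy. apply (is_filter_lim_locally_unique (K:=R_AbsRing) (V:=AbsRing_NormedModule R_AbsRing)) in Hy. subst y.
intros eps. destruct (holo_real phi x l H eps (cond_pos eps)) as [d [Hd Hb]].
apply (locally_norm_le_locally (K:=R_AbsRing) (V:=AbsRing_NormedModule R_AbsRing)). exists (mkposreal d Hd). intros t Ht.
unfold ball_norm in Ht. simpl in Ht.
change (Rabs (Re (phi (RtoC t)) - Re (phi (RtoC x)) - (t - x) * Re l) <= eps * Rabs (t - x)).
eapply Rle_trans. 2: apply Hb; exact Ht.
eapply Rle_trans. 2: apply re_le_Cmod. right. f_equal. unfold Cminus.
rewrite !re_plus, !re_opp, re_mult. simpl. ring.
Qed.

Lemma holo_real_Im (phi : C -> C) x l : CD phi (RtoC x) l ->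
  is_derive (fun t => Im (phi (RtoC t))) x (Im l).
Proof.
intros H. split. apply is_linear_scal_l.
intros y Hy. apply (is_filter_lim_locally_unique (K:=R_AbsRing) (V:=AbsRing_NormedModule R_AbsRing)) in Hy. subst y.
intros eps. destruct (holo_real phi x l H eps (cond_pos eps)) as [d [Hd Hb]].
apply (locally_norm_le_locally (K:=R_AbsRing) (V:=AbsRing_NormedModule R_AbsRing)). exists (mkposreal d Hd). intros t Ht.
unfold ball_norm in Ht. simpl in Ht.
change (Rabs (Im (phi (RtoC t)) - Im (phi (RtoC x)) - (t - x) * Im l) <= eps * Rabs (t - x)).
eapply Rle_trans. 2: apply Hb; exact Ht.
set (w := (phi (RtoC t) - phi (RtoC x) - RtoC (t - x) * l)%C).
replace (Im (phi (RtoC t)) - Im (phi (RtoC x)) - (t - x) * Im l) with (Im w).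
destruct w as [a b]. apply Rabs_le_Cmod_im.
unfold w, Cminus. rewrite !im_plus, !im_opp, im_mult. simpl. ring.
Qed.


Lemma CD_to (f : C -> C) z l : CD f z l -> is_derive (K := C_AbsRing) (V := AbsRing_NormedModule C_AbsRing) f z l.
Proof. intros [_ H]. split. apply is_linear_scal_l. intros x Hx eps. exact (H x Hx eps). Qed.
Lemma CD_of (f : C -> C) z l : is_derive (K := C_AbsRing) (V := AbsRing_NormedModule C_AbsRing) f z l -> CD f z l.
Proof. intros [_ H]. split. apply is_linear_scal_l. intros x Hx eps. exact (H x Hx eps). Qed.

Lemma CD_ext (f g : C -> C) z l : (forall w, f w = g w) -> CD f z l -> CD g z l.
Proof. intros E H. unfold CD. eapply is_derive_ext. exact E. exact H. Qed.

Lemma CD_eq_l (f : C -> C) z l l' : CD f z l -> l = l' -> CD f z l'.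
Proof. intros H <-; exact H. Qed.

Lemma CD_const (c z : C) : CD (fun _ => c) z (RtoC 0).
Proof.
apply (CD_of_bound _ _ _ 1 0); try lra. intros w _.
replace (c - c - (w - z) * 0)%C with (RtoC 0) by ring. rewrite Cmod_0.
pose proof (Cmod_ge_0 (w - z)). nra.
Qed.

Lemma CD_lin (c z : C) : CD (fun w => c * w)%C z c.
Proof.
apply (CD_of_bound _ _ _ 1 0); try lra. intros w _.
replace (c * w - c * z - (w - z) * c)%C with (RtoC 0) by ring. rewrite Cmod_0.
pose proof (Cmod_ge_0 (w - z)). nra.
Qed.

Lemma CD_id (z : C) : CD (fun w => w) z (RtoC 1).
Proof. eapply CD_ext. 2: apply (CD_lin (RtoC 1) z). intros; simpl; ring. Qed.

Lemma CD_mult (f g : C -> C) z df dg : CD f z df -> CD g z dg ->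
  CD (fun w => f w * g w)%C z (df * g z + f z * dg)%C.
Proof.
intros Hf Hg. apply CD_of.
apply (is_derive_mult (K:=C_AbsRing) f g z df dg (CD_to _ _ _ Hf) (CD_to _ _ _ Hg)).
intros; apply Cmult_comm.
Qed.

Lemma CD_plus (f g : C -> C) z df dg : CD f z df -> CD g z dg ->
  CD (fun w => f w + g w)%C z (df + dg)%C.
Proof. intros Hf Hg. apply (is_derive_plus (K:=C_AbsRing) (V:=C_NormedModule) f g z df dg Hf Hg). Qed.

Lemma CD_opp (f : C -> C) z df : CD f z df -> CD (fun w => - f w)%C z (- df)%C.
Proof. intros Hf. apply (is_derive_opp (K:=C_AbsRing) (V:=C_NormedModule) f z df Hf). Qed.

Lemma CD_minus (f g : C -> C) z df dg : CD f z df -> CD g z dg ->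
  CD (fun w => f w - g w)%C z (df - dg)%C.
Proof. intros Hf Hg. apply (is_derive_minus (K:=C_AbsRing) (V:=C_NormedModule) f g z df dg Hf Hg). Qed.

Lemma CD_comp (f g : C -> C) z df dg : CD f (g z) df -> CD g z dg ->
  CD (fun w => f (g w)) z (dg * df)%C.
Proof. intros Hf Hg. apply (is_derive_comp (K:=C_AbsRing) (V:=C_NormedModule) f g z df dg Hf (CD_to _ _ _ Hg)). Qed.

Lemma CD_exp_lin (c z : C) : CD (fun w => Cexp (- (w * c)))%C z (- c * Cexp (- (z * c)))%C.
Proof.
apply (CD_comp Cexp (fun w => - (w * c))%C z). apply CD_Cexp.
eapply CD_ext. 2: apply (CD_lin (- c)%C z). intros; simpl; ring.
Qed.


Definition hC (z : C) (t : R) : C := ((1 - Cexp (- (RtoC t * z))) / RtoC t)%C.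

Lemma RtoC_neq0 t : t <> 0 -> RtoC t <> 0%C.
Proof. intros H E. apply H. injection E. auto. Qed.

Lemma Cmod_RtoC_mult t z : Cmod (RtoC t * z) = Rabs t * Cmod z.
Proof. rewrite Cmod_mult, Cmod_R. reflexivity. Qed.

Lemma hC_near0 z t : t <> 0 -> Rabs t * Cmod z <= 1/2 ->
  Cmod (hC z t - z) <= 3 * Rabs t * Cmod z ^ 2.
Proof.
intros Ht Hs. set (w := (- (RtoC t * z))%C).
assert (Hw : Cmod w = Rabs t * Cmod z) by (unfold w; rewrite Cmod_opp, Cmod_RtoC_mult; auto).
replace (hC z t - z)%C with (- (Cexp w - 1 - w) / RtoC t)%C.
2: { unfold hC, w. field. apply RtoC_neq0; auto. }
rewrite Cmod_div by (apply RtoC_neq0; auto). rewrite Cmod_opp, Cmod_R.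
pose proof (Cexp_taylor w ltac:(lra)). rewrite Hw in H.
assert (0 < Rabs t) by (apply Rabs_pos_lt; auto).
apply (Rmult_le_reg_r (Rabs t)); auto. unfold Rdiv. rewrite Rmult_assoc, Rinv_l by lra.
eapply Rle_trans. rewrite Rmult_1_r. apply H. right. ring.
Qed.

Lemma cont_hC z t : t <> 0 ->
  continuous (T := R_UniformSpace) (U := C_R_CompleteNormedModule) (hC z) t.
Proof.
intros Ht.
assert (D : CD (fun tau => ((1 - Cexp (- (tau * z))) / tau)%C) (RtoC t)
   ((RtoC 0 - (- z * Cexp (- (RtoC t * z)))) * / RtoC t + (1 - Cexp (- (RtoC t * z))) * (- / (RtoC t * RtoC t)))%C).
{ apply (CD_mult (fun tau => 1 - Cexp (- (tau * z)))%C (fun tau => / tau)%C).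
  apply CD_minus. apply CD_const. apply CD_exp_lin. apply CD_inv. apply RtoC_neq0; auto. }
apply holo_real_CR in D.
apply (ex_derive_continuous (K := R_AbsRing) (V := C_R_NormedModule)).
eexists. exact D.
Qed.

Lemma ex_RInt_h z T : 0 < T -> ex_RInt (V := C_R_CompleteNormedModule) (hC z) 0 T.
Proof.
intros HT.
set (g := fun t => if Req_EM_T t 0 then z else hC z t).
apply (ex_RInt_ext (V := C_R_CompleteNormedModule) g).
{ intros x Hx. rewrite Rmin_left, Rmax_right in Hx by lra. unfold g.
  destruct (Req_EM_T x 0); [lra | reflexivity]. }
apply (ex_RInt_continuous (V := C_R_CompleteNormedModule)). intros t Ht.
destruct (Req_EM_T t 0) as [E|E].
- subst t. 
  apply (proj2 (filterlim_locally_ball_norm (K := R_AbsRing) (U := C_R_NormedModule) g (g 0))).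
  intros eps.
  apply (locally_norm_le_locally (K:=R_AbsRing) (V:=AbsRing_NormedModule R_AbsRing)).
  assert (Hp : 0 < Rmin (1 / (2 * (Cmod z + 1))) (eps / (3 * Cmod z ^ 2 + 1))).
  { pose proof (Cmod_ge_0 z). pose proof (cond_pos eps). apply Rmin_pos; apply Rdiv_lt_0_compat; try nra. }
  exists (mkposreal _ Hp). intros t Htd.
  change (Rabs (t - 0) < Rmin (1 / (2 * (Cmod z + 1))) (eps / (3 * Cmod z ^ 2 + 1))) in Htd.
  unfold ball_norm. rewrite <- Cmod_norm.
  change (Cmod (g t - g 0)%C < eps).
  assert (g0 : g 0 = z). { unfold g. destruct (Req_EM_T 0 0); [reflexivity | lra]. }
  rewrite g0. unfold g. destruct (Req_EM_T t 0) as [E|E].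
  + replace (z - z)%C with (RtoC 0) by ring. rewrite Cmod_0. apply cond_pos.
  + rewrite Rminus_0_r in Htd.
    pose proof (Rmin_l (1 / (2 * (Cmod z + 1))) (eps / (3 * Cmod z ^ 2 + 1))).
    pose proof (Rmin_r (1 / (2 * (Cmod z + 1))) (eps / (3 * Cmod z ^ 2 + 1))).
    pose proof (Cmod_ge_0 z). pose proof (Rabs_pos t). pose proof (cond_pos eps).
    assert (A1 : Rabs t * Cmod z <= 1/2).
    { assert (Rabs t * (2 * (Cmod z + 1)) <= 1).
      { assert (Rabs t <= 1 / (2 * (Cmod z + 1))) by lra.
        apply (Rmult_le_compat_r (2 * (Cmod z + 1))) in H4; [|lra].
        unfold Rdiv in H4. rewrite Rmult_1_l, Rinv_l in H4 by lra. exact H4. }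
      nra. }
    eapply Rle_lt_trans. apply hC_near0; auto.
    assert (Rabs t * (3 * Cmod z ^ 2 + 1) < eps).
    { assert (Rabs t < eps / (3 * Cmod z ^ 2 + 1)) by lra.
      apply (Rmult_lt_compat_r (3 * Cmod z ^ 2 + 1)) in H4; [|nra].
      unfold Rdiv in H4. rewrite Rmult_assoc, Rinv_l, Rmult_1_r in H4 by nra. exact H4. }
    nra.
- apply (continuous_ext_loc _ (hC z)).
  + apply (locally_interval _ t (Finite 0) p_infty).
    * simpl. rewrite Rmin_left, Rmax_right in Ht by lra. lra.
    * exact I.
    * intros y Hy _. simpl in Hy. unfold g. destruct (Req_EM_T y 0); [lra | reflexivity].
  + apply cont_hC; auto.
Qed.

Lemma is_RInt_R_eq (g : R -> R) a b v v' : is_RInt g a b v -> v = v' -> is_RInt g a b v'.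
Proof. intros H <-; exact H. Qed.

Lemma is_RInt_Cmult_l (f : R -> C) a b (l c : C) :
  is_RInt (V := C_R_CompleteNormedModule) f a b l ->
  is_RInt (V := C_R_CompleteNormedModule) (fun t => (c * f t)%C) a b (c * l)%C.
Proof.
intros H.
pose proof (is_RInt_fct_extend_fst (U:=R_NormedModule) (V:=R_NormedModule) f a b l H) as H1.
pose proof (is_RInt_fct_extend_snd (U:=R_NormedModule) (V:=R_NormedModule) f a b l H) as H2.
destruct c as [c1 c2]. destruct l as [l1 l2]. cbn [fst snd] in H1, H2.
replace ((c1, c2) * (l1, l2))%C with (c1 * l1 - c2 * l2, c1 * l2 + c2 * l1) by reflexivity.
apply (is_RInt_ext (V := C_R_CompleteNormedModule)
  (fun t => (c1 * fst (f t) - c2 * snd (f t), c1 * snd (f t) + c2 * fst (f t)))).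
{ intros x _. unfold Cmult. cbn [fst snd]. reflexivity. }
apply (is_RInt_fct_extend_pair (U:=R_NormedModule) (V:=R_NormedModule)).
- cbn [fst snd].
  apply (is_RInt_ext (V := R_NormedModule) (fun t => minus (scal c1 (fst (f t))) (scal c2 (snd (f t))))).
  { intros x _. unfold minus, plus, opp, scal; simpl. unfold mult; simpl. ring. }
  eapply is_RInt_R_eq. apply (is_RInt_minus (V := R_NormedModule)); apply (is_RInt_scal (V := R_NormedModule)); eassumption.
  unfold minus, plus, opp, scal; simpl. unfold mult; simpl. ring.
- cbn [fst snd].
  apply (is_RInt_ext (V := R_NormedModule) (fun t => plus (scal c1 (snd (f t))) (scal c2 (fst (f t))))).
  { intros x _. unfold plus, scal; simpl. unfold mult; simpl. ring. }
  eapply is_RInt_R_eq. apply (is_RInt_plus (V := R_NormedModule)); apply (is_RInt_scal (V := R_NormedModule)); eassumption.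
  unfold plus, scal; simpl. unfold mult; simpl. ring.
Qed.

Lemma is_RInt_C_eq (g : R -> C) a b v v' : is_RInt (V := C_R_CompleteNormedModule) g a b v -> v = v' ->
  is_RInt (V := C_R_CompleteNormedModule) g a b v'.
Proof. intros H <-; exact H. Qed.

Lemma is_RInt_exp (s : C) T : s <> 0%C ->
  is_RInt (V := C_R_CompleteNormedModule) (fun t => Cexp (- (RtoC t * s))) 0 T
    ((1 - Cexp (- (RtoC T * s))) / s)%C.
Proof.
intros Hs.
set (F := fun t : R => (- Cexp (- (RtoC t * s)) * / s)%C).
eapply is_RInt_C_eq.
apply (is_RInt_derive (V := C_R_CompleteNormedModule) F).
- intros x _. unfold F.
  apply (holo_real_CR (fun tau => (- Cexp (- (tau * s)) * / s)%C)).
  eapply CD_eq_l.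
  apply (CD_mult (fun tau => - Cexp (- (tau * s)))%C (fun _ => / s)%C).
  apply CD_opp. apply CD_exp_lin. apply CD_const.
  match goal with |- ?a = ?b => change (@eq C a b) end. field. exact Hs.
- intros x _.
  apply (ex_derive_continuous (K := R_AbsRing) (V := C_R_NormedModule)).
  eexists. apply (holo_real_CR (fun tau => Cexp (- (tau * s)))). apply CD_exp_lin.
- change ((F T - F 0)%C = ((1 - Cexp (- (RtoC T * s))) / s)%C).
  unfold F. replace (- (RtoC 0 * s))%C with (RtoC 0) by ring. rewrite Cexp_0.
  field. exact Hs.
Qed.

Lemma exp_le_1 x : x <= 0 -> exp x <= 1.
Proof.
intros H. destruct (Req_dec x 0) as [->|N]. rewrite exp_0; lra.
left. rewrite <- exp_0. apply exp_increasing. lra.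
Qed.

Lemma Cmod_exp_s t (s : C) : Re s = 1 -> 0 <= t -> Cmod (Cexp (- (RtoC t * s))) <= 1.
Proof.
intros Hs Ht. rewrite Cmod_Cexp. rewrite re_opp, re_mult, Hs. simpl.
apply exp_le_1. lra.
Qed.

Lemma D_bound (s z : C) t T : Re s = 1 -> 0 < t <= T -> Cmod (z - s) * T <= 1/2 ->
  Cmod (hC z t - hC s t - (z - s) * Cexp (- (RtoC t * s))) <= 3 * T * Cmod (z - s) ^ 2.
Proof.
intros Hs Ht Hz.
set (w := (- (RtoC t * (z - s)))%C).
assert (E : Cexp (- (RtoC t * z)) = (Cexp (- (RtoC t * s)) * Cexp w)%C).
{ rewrite <- Cexp_add. f_equal. unfold w. ring. }
assert (Ht0 : RtoC t <> 0%C) by (apply RtoC_neq0; lra).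
replace (hC z t - hC s t - (z - s) * Cexp (- (RtoC t * s)))%C
  with (- Cexp (- (RtoC t * s)) * (Cexp w - 1 - w) / RtoC t)%C.
2: { unfold hC. rewrite E. unfold w. field. exact Ht0. }
rewrite Cmod_div by exact Ht0. rewrite Cmod_mult, Cmod_opp, Cmod_R.
rewrite Rabs_right by lra.
assert (Hw : Cmod w = t * Cmod (z - s)).
{ unfold w. rewrite Cmod_opp, Cmod_RtoC_mult, Rabs_right by lra. reflexivity. }
pose proof (Cmod_ge_0 (z - s)).
assert (Cmod w <= 1/2) by (rewrite Hw; nra).
pose proof (Cexp_taylor w H0). rewrite Hw in H1.
pose proof (Cmod_exp_s t s Hs ltac:(lra)).
pose proof (Cmod_ge_0 (Cexp (- (RtoC t * s)))).
pose proof (Cmod_ge_0 (Cexp w - 1 - w)).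
apply (Rmult_le_reg_r t). lra. unfold Rdiv. rewrite Rmult_assoc, Rinv_l, Rmult_1_r by lra.
assert (Cmod (Cexp (- (RtoC t * s))) * Cmod (Cexp w - 1 - w) <= Cmod (Cexp w - 1 - w)).
{ nra. }
assert (3 * (t * Cmod (z - s)) ^ 2 <= 3 * T * Cmod (z - s) ^ 2 * t).
{ replace (3 * (t * Cmod (z - s)) ^ 2) with (3 * t * Cmod (z - s) ^ 2 * t) by ring.
  assert (0 <= Cmod (z - s) ^ 2) by nra.
  apply Rmult_le_compat_r. lra. nra. }
lra.
Qed.

Lemma G_CD v (s : C) : 0 < v -> Re s = 1 ->
  CD (fun z => G v z) s ((1 - Cexp (- (RtoC (1 / v) * s))) / s)%C.
Proof.
intros Hv Hs. set (T := 1 / v).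
assert (HT : 0 < T) by (unfold T; apply Rdiv_lt_0_compat; lra).
assert (Hs0 : s <> 0%C). { intros ->. simpl in Hs. lra. }
apply (CD_of_bound _ _ _ (1 / (2 * T)) (3 * T * T)).
{ apply Rdiv_lt_0_compat; lra. } { nra. }
intros z Hz. cbv beta.
assert (Hzs : Cmod (z - s) * T <= 1/2).
{ apply (Rmult_lt_compat_r T) in Hz; [|lra].
  replace (1 / (2 * T) * T) with (1/2) in Hz by (field; lra). lra. }
pose proof (RInt_correct (V := C_R_CompleteNormedModule) _ _ _ (ex_RInt_h z T HT)) as IZ.
pose proof (RInt_correct (V := C_R_CompleteNormedModule) _ _ _ (ex_RInt_h s T HT)) as IS.
pose proof (is_RInt_Cmult_l _ _ _ _ (z - s)%C (is_RInt_exp s T Hs0)) as IE.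
pose proof (is_RInt_minus (V := C_R_CompleteNormedModule) _ _ _ _ _ _
   (is_RInt_minus (V := C_R_CompleteNormedModule) _ _ _ _ _ _ IZ IS) IE) as I.
set (D' := fun t => if Req_EM_T t 0 then RtoC 0 else (hC z t - hC s t - (z - s) * Cexp (- (RtoC t * s)))%C).
apply (is_RInt_ext (V := C_R_CompleteNormedModule) _ D') in I.
2: { intros x Hx. rewrite Rmin_left, Rmax_right in Hx by lra. unfold D'.
     destruct (Req_EM_T x 0); [lra | reflexivity]. }
assert (BD : forall x, 0 <= x <= T -> @norm R_AbsRing C_R_CompleteNormedModule (D' x) <= 3 * T * Cmod (z - s) ^ 2).
{ intros x Hx. change (@norm R_AbsRing (prod_NormedModule R_AbsRing R_NormedModule R_NormedModule) (D' x) <= 3 * T * Cmod (z - s) ^ 2).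
  rewrite <- Cmod_norm. unfold D'. destruct (Req_EM_T x 0).
  - change (Cmod (RtoC 0) <= 3 * T * Cmod (z - s) ^ 2). rewrite Cmod_0.
    pose proof (Cmod_ge_0 (z - s)). assert (0 <= Cmod (z - s) ^ 2) by (apply pow2_ge_0). 
    apply Rmult_le_pos; lra.
  - change (Cmod (hC z x - hC s x - (z - s) * Cexp (- (RtoC x * s)))%C <= 3 * T * Cmod (z - s) ^ 2).
    apply D_bound; auto. lra. }
pose proof (norm_RInt_le_const (V := C_R_CompleteNormedModule) _ _ _ _ _ (Rlt_le _ _ HT) BD I) as I2.
clear I. rename I2 into I.
match type of I with @norm _ _ ?a <= ?b => change (@norm R_AbsRing (prod_NormedModule R_AbsRing R_NormedModule R_NormedModule) a <= b) in I end.
rewrite <- Cmod_norm in I.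
unfold G. fold T.
replace (3 * T * T * Cmod (z - s) ^ 2) with ((T - 0) * (3 * T * Cmod (z - s) ^ 2)) by ring.
exact I.
Qed.


Lemma CDerive_G v (s : C) : 0 < v -> Re s = 1 ->
  CDerive (fun z => G v z) s = ((1 - Cexp (- (RtoC (1 / v) * s))) / s)%C.
Proof.
intros Hv Hs. pose proof (G_CD v s Hv Hs) as H.
unfold CDerive.
match goal with |- epsilon ?i ?P = _ => 
  assert (HP : P (epsilon i P)) by (apply epsilon_spec; eexists; exact H) end.
rewrite <- (is_C_derive_unique _ _ _ HP).
rewrite <- (is_C_derive_unique _ _ _ H). reflexivity.
Qed.

Definition Phi (s : C) (tau : C) : C := (1 - Cexp (- (/ tau * s)))%C.

Lemma sdG_Phi v (s : C) : 0 < v -> Re s = 1 -> sdG v s = Phi s (RtoC v).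
Proof.
intros Hv Hs. unfold sdG. rewrite CDerive_G by auto. unfold Phi.
assert (Hs0 : s <> 0%C). { intros ->. simpl in Hs. lra. }
replace (RtoC (1 / v)) with (/ RtoC v)%C.
- field. exact Hs0.
- unfold Rdiv. rewrite Rmult_1_l. rewrite RtoC_inv by lra. reflexivity.
Qed.

Definition cterm (s w : C) (p : R * nat * nat) : C :=
  let '((c, k), j) := p in (RtoC c * s ^ k * w ^ j)%C.

Fixpoint polyv (s w : C) (L : list (R * nat * nat)) : C :=
  match L with
  | nil => RtoC 0
  | p :: L' => (cterm s w p + polyv s w L')%C
  end.

Fixpoint dLpart (L : list (R * nat * nat)) : list (R * nat * nat) :=
  match L with
  | nil => nil
  | ((c, k), j) :: L' => ((- c * INR j, k), S j) :: dLpart L'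
  end.

Fixpoint dL (L : list (R * nat * nat)) : list (R * nat * nat) :=
  match L with
  | nil => nil
  | ((c, k), j) :: L' => ((c, S k), S (S j)) :: ((- c * INR j, k), S j) :: dL L'
  end.

Lemma poly_dL s w L : polyv s w (dL L) = (s * w * w * polyv s w L + polyv s w (dLpart L))%C.
Proof.
induction L as [|[[c k] j] L IH]; simpl.
- ring.
- rewrite IH. ring.
Qed.

Lemma CD_invpow j (t0 : C) : t0 <> 0%C ->
  CD (fun t => (/ t) ^ j)%C t0 (- RtoC (INR j) * (/ t0) ^ (S j))%C.
Proof.
intros H. induction j as [|j IH].
- eapply CD_eq_l. eapply CD_ext. 2: apply (CD_const (RtoC 1) t0). intros; reflexivity.
  simpl. match goal with |- ?a = ?b => change (@eq C a b) end. ring.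
- eapply CD_eq_l. eapply CD_ext. 2: apply (CD_mult (fun t => / t)%C (fun t => (/ t) ^ j)%C t0 _ _ (CD_inv t0 H) IH).
  intros; reflexivity.
  match goal with |- ?a = ?b => change (@eq C a b) end.
  rewrite S_INR, RtoC_plus. simpl. field. exact H.
Qed.

Lemma CD_poly (s t0 : C) L : t0 <> 0%C ->
  CD (fun t => polyv s (/ t) L) t0 (polyv s (/ t0) (dLpart L)).
Proof.
intros H. induction L as [|[[c k] j] L IH].
- simpl. apply CD_const.
- simpl. apply CD_plus; [|exact IH].
  eapply CD_eq_l.
  apply (CD_mult (fun _ => RtoC c * s ^ k)%C (fun t => (/ t) ^ j)%C t0).
  apply CD_const. apply CD_invpow. exact H.
  match goal with |- ?a = ?b => change (@eq C a b) end.
  rewrite RtoC_mult, RtoC_opp, Cpow_S. ring.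
Qed.

Definition Psi (L : list (R * nat * nat)) (s t : C) : C := (Cexp (- (/ t * s)) * polyv s (/ t) L)%C.

Lemma CD_expinv (s t0 : C) : t0 <> 0%C ->
  CD (fun t => Cexp (- (/ t * s)))%C t0 (s * / t0 * / t0 * Cexp (- (/ t0 * s)))%C.
Proof.
intros H. eapply CD_eq_l.
apply (CD_comp Cexp (fun t => - (/ t * s))%C t0). apply CD_Cexp.
apply CD_opp. apply (CD_mult (fun t => / t)%C (fun _ => s)). apply CD_inv. exact H. apply CD_const.
match goal with |- ?a = ?b => change (@eq C a b) end. field. exact H.
Qed.

Lemma CD_Psi L (s t0 : C) : t0 <> 0%C -> CD (Psi L s) t0 (Psi (dL L) s t0).
Proof.
intros H. unfold Psi. eapply CD_eq_l.
apply (CD_mult (fun t => Cexp (- (/ t * s)))%C (fun t => polyv s (/ t) L)).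
apply CD_expinv; exact H. apply CD_poly; exact H.
match goal with |- ?a = ?b => change (@eq C a b) end.
rewrite poly_dL. ring.
Qed.

Lemma RtoC_m1 : RtoC (-1) = (- RtoC 1)%C.
Proof. unfold RtoC, Copp; simpl. f_equal; ring. Qed.

Lemma CD_Phi (s t0 : C) : t0 <> 0%C -> CD (Phi s) t0 (Psi [((-1, 1%nat), 2%nat)] s t0).
Proof.
intros H. unfold Phi, Psi. eapply CD_eq_l.
apply (CD_minus (fun _ => RtoC 1) (fun t => Cexp (- (/ t * s)))%C).
apply CD_const. apply CD_expinv; exact H.
match goal with |- ?a = ?b => change (@eq C a b) end.
simpl. rewrite RtoC_m1. ring.
Qed.

Lemma DerC_step n (f : R -> C) (psi dpsi : C -> C) y : 0 < y ->
  (forall x, 0 < x -> DerC n f x = psi (RtoC x)) ->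
  (forall x, 0 < x -> CD psi (RtoC x) (dpsi (RtoC x))) ->
  DerC (S n) f y = dpsi (RtoC y).
Proof.
intros Hy Heq Hd. simpl.
assert (Loc : locally y (fun t => 0 < t)).
{ apply (locally_interval _ y (Finite 0) p_infty). simpl; lra. exact I. intros z Hz _. exact Hz. }
rewrite (Derive_ext_loc _ (fun t => Re (psi (RtoC t)))).
2: { eapply filter_imp. 2: exact Loc. intros t Ht. simpl. rewrite Heq; auto. }
rewrite (Derive_ext_loc (fun y0 => Im (DerC n f y0)) (fun t => Im (psi (RtoC t)))).
2: { eapply filter_imp. 2: exact Loc. intros t Ht. simpl. rewrite Heq; auto. }
assert (E1 : Derive (fun t => Re (psi (RtoC t))) y = Re (dpsi (RtoC y)))
  by (apply is_derive_unique; apply holo_real_Re; auto).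
assert (E2 : Derive (fun t => Im (psi (RtoC t))) y = Im (dpsi (RtoC y)))
  by (apply is_derive_unique; apply holo_real_Im; auto).
transitivity (Re (dpsi (RtoC y)), Im (dpsi (RtoC y))). f_equal; [exact E1 | exact E2].
destruct (dpsi (RtoC y)); reflexivity.
Qed.

Fixpoint Lf (n : nat) : list (R * nat * nat) :=
  match n with
  | O => [((-1, 1%nat), 2%nat)]
  | S m => dL (Lf m)
  end.

Lemma RtoC_neq0' x : 0 < x -> RtoC x <> 0%C.
Proof. intros H. apply RtoC_neq0. lra. Qed.

Lemma DerC_formula (s : C) n : Re s = 1 ->
  forall y, 0 < y -> DerC (S n) (fun v => sdG v s) y = Psi (Lf n) s (RtoC y).
Proof.
intros Hs. induction n as [|n IH]; intros y Hy.
- apply (DerC_step 0 _ (Phi s) (Psi (Lf 0) s)); auto.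
  + intros x Hx. simpl. apply sdG_Phi; auto.
  + intros x Hx. apply CD_Phi. apply RtoC_neq0'; auto.
- apply (DerC_step (S n) _ (Psi (Lf n) s) (Psi (Lf (S n)) s)); auto.
  intros x Hx. apply CD_Psi. apply RtoC_neq0'; auto.
Qed.

Definition invL (N : nat) (L : list (R * nat * nat)) : Prop :=
  List.Forall (fun p => snd p = (N + snd (fst p))%nat /\ (snd (fst p) <= N)%nat) L.

Lemma invL_dL N L : invL N L -> invL (S N) (dL L).
Proof.
unfold invL. induction L as [|[[c k] j] L IH]; intros H; simpl.
- constructor.
- inversion H as [|x l [H1 H2] H3]; subst. simpl in H1, H2.
  constructor. simpl. split; lia.
  constructor. simpl. split; lia.
  apply IH; auto.
Qed.

Lemma invL_Lf n : invL (S n) (Lf n).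
Proof.
induction n as [|n IH].
- unfold invL. simpl. constructor. simpl. split; lia. constructor.
- simpl. apply invL_dL. exact IH.
Qed.

Fixpoint sumabs (L : list (R * nat * nat)) : R :=
  match L with
  | nil => 0
  | p :: L' => Rabs (fst (fst p)) + sumabs L'
  end.

Lemma sumabs_ge0 L : 0 <= sumabs L.
Proof. induction L; simpl. lra. pose proof (Rabs_pos (fst (fst a))). lra. Qed.

Lemma real_key a b k m : 0 < b -> 0 <= a -> 1 <= a * b ->
  a ^ k * b ^ (k + m + k) <= a ^ (k + m) * b ^ (2 * (k + m)).
Proof.
intros Hb Ha Hab.
assert (E : (2 * (k + m) = k + m + k + m)%nat) by lia. rewrite E.
rewrite !pow_add.
replace (a ^ k * a ^ m * (b ^ k * b ^ m * b ^ k * b ^ m))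
  with ((a ^ k * (b ^ k * b ^ m * b ^ k)) * (a * b) ^ m) by (rewrite Rpow_mult_distr; ring).
pose proof (pow_R1_Rle (a * b) m Hab).
assert (0 <= a ^ k * (b ^ k * b ^ m * b ^ k)).
{ apply Rmult_le_pos. apply pow_le; lra.
  apply Rmult_le_pos. apply Rmult_le_pos; apply pow_le; lra. apply pow_le; lra. }
nra.
Qed.

Lemma poly_bound N L (s : C) u : invL N L -> 1 <= u -> u <= Cmod s ->
  Cmod (polyv s (/ RtoC u) L) <= sumabs L * (Cmod s ^ N * (/ u) ^ (2 * N)).
Proof.
intros HL Hu Hs. induction L as [|[[c k] j] L IH]; simpl.
- rewrite Cmod_0. lra.
- inversion HL as [|x l [H1 H2] H3]; subst. simpl in H1, H2.
  specialize (IH H3).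
  eapply Rle_trans. apply Cmod_triangle.
  assert (T : Cmod (RtoC c * s ^ k * (/ RtoC u) ^ (N + k)) <= Rabs c * (Cmod s ^ N * (/ u) ^ (2 * N))).
  { rewrite !Cmod_mult, !Cmod_pow, Cmod_R.
    rewrite Cmod_inv by (apply RtoC_neq0'; lra). rewrite Cmod_R, (Rabs_right u) by lra.
    rewrite Rmult_assoc. apply Rmult_le_compat_l. apply Rabs_pos.
    destruct (Nat.le_exists_sub k N H2) as [m [-> _]].
    replace (m + k + k)%nat with (k + m + k)%nat by lia.
    replace (m + k)%nat with (k + m)%nat by lia.
    apply real_key. apply Rinv_0_lt_compat; lra. apply Cmod_ge_0.
    apply (Rmult_le_reg_r u). lra. rewrite Rmult_assoc, Rinv_l by lra. lra. }
  subst j. replace (N + (N + 0))%nat with (2 * N)%nat by lia. rewrite Rmult_plus_distr_r. lra.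
Qed.

Lemma Cexp_bound (s : C) u : Re s = 1 -> 0 < u -> Cmod (Cexp (- (/ RtoC u * s))) <= 1.
Proof.
intros Hs Hu. rewrite Cmod_Cexp. rewrite <- RtoC_inv by lra.
rewrite re_opp, re_mult, Hs. simpl. apply exp_le_1.
pose proof (Rinv_0_lt_compat u Hu). lra.
Qed.

Theorem lemma10 :
  forall nu : nat, exists K : R, 0 < K /\
    forall (u : R) (s : C),
      Re s = 1 -> 1 <= u -> Cmod s > u ->
      Cmod (DerC nu (fun v => sdG v s) u) <= K * (Cmod s) ^ nu / u ^ (2 * nu).
Proof.
intros [|n].
- exists 2. split. lra. intros u s Hs Hu Hsu. simpl.
  rewrite sdG_Phi by (auto; lra). unfold Phi.
  unfold Cminus. eapply Rle_trans. apply Cmod_triangle. rewrite Cmod_opp, Cmod_1.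
  pose proof (Cexp_bound s u Hs ltac:(lra)). lra.
- exists (sumabs (Lf n) + 1). split. pose proof (sumabs_ge0 (Lf n)). lra.
  intros u s Hs Hu Hsu.
  rewrite DerC_formula by (auto; lra). unfold Psi.
  rewrite Cmod_mult.
  pose proof (Cexp_bound s u Hs ltac:(lra)).
  pose proof (poly_bound (S n) (Lf n) s u (invL_Lf n) Hu ltac:(lra)).
  pose proof (Cmod_ge_0 (Cexp (- (/ RtoC u * s)))).
  pose proof (Cmod_ge_0 (polyv s (/ RtoC u) (Lf n))).
  pose proof (sumabs_ge0 (Lf n)).
  assert (0 <= Cmod s ^ S n * (/ u) ^ (2 * S n)).
  { apply Rmult_le_pos; apply pow_le. apply Cmod_ge_0. left; apply Rinv_0_lt_compat; lra. }
  unfold Rdiv. rewrite <- pow_inv. 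
  replace ((sumabs (Lf n) + 1) * Cmod s ^ S n * (/ u) ^ (2 * S n)) with
    ((sumabs (Lf n) + 1) * (Cmod s ^ S n * (/ u) ^ (2 * S n))) by ring.
  nra.
Qed.
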